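(* For all integers $n\ge1$ and $0\le i\le n-1$, the simplicial shelling components satisfy $$\Theta(\check{\Phi}_{n,i})=q^{i}\cdot[2(n-i)]\cdot[n-1]!.$$
   Context: $\mathbf{a},\mathbf{b}$ are non-commuting variables and $\mathbf{c}=\mathbf{a}+\mathbf{b}$. For a graded poset $P$ of rank $m+1$ with minimum $\hat0$, maximum $\hat1$ and rank function $\rho$, its $\mathbf{a}\mathbf{b}$-index is $\Psi(P)=\sum_{S\subseteq\{1,\dots,m\}} f_S\, v_S$, where for $S=\{s_1<\cdots<s_k\}$, $f_S$ is the number of chains $\hat0<x_1<\cdots<x_k<\hat1$ with $\rho(x_i)=s_i$, and $v_S=v_1\cdots v_m$ with $v_i=\mathbf{b}$ if $i\in S$, $v_i=\mathbf{a}-\mathbf{b}$ otherwise. $B_n$ is the Boolean algebra of rank $n$. $G$ is the derivation of $\mathbb{Z}\langle\mathbf{a},\mathbf{b}\rangle$ with $G(1)=0$, $G(\mathbf{a})=\mathbf{b}\mathbf{a}$, $G(\mathbf{b})=\mathbf{a}\mathbf{b}$. The simplicial shelling components are defined by $\check{\Phi}_{n,0}=\Psi(B_n)\cdot\mathbf{c}$ for $n\ge1$ and $\check{\Phi}_{n,i}=G(\check{\Phi}_{n-1,i-1})$ for $1\le i\le n-1$. The Major MacMahon map $\Theta:\mathbb{Z}\langle\mathbf{a},\mathbf{b}\rangle\to\mathbb{Z}[q]$ is linear with $\Theta(u_1\cdots u_n)=\prod_{i:\,u_i=\mathbf{b}}q^i$ on monomials. $[m]=1+q+\cdots+q^{m-1}$,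 $[m]!=[m]\cdots[1]$, $[0]!=1$. *)

(* Defs.v *)
From mathcomp Require Import all_boot all_order all_algebra.
Set Implicit Arguments. Unset Strict Implicit. Unset Printing Implicit Defensive.
Import GRing.Theory.
Local Open Scope ring_scope.

(* A letter is a bool: false = a, true = b.  A monomial is a word. *)
Definition word := seq bool.
(* An element of Z<a,b> is represented by a formal (unreduced) sum of
   coefficient-word pairs; all maps considered below are defined as the
   linear extensions of their values on words, hence are well defined on
   the free algebra. *)
Definition abpoly := seq (int * word).

Definition ab_one : abpoly := [:: (1%:Z, [::])].
Definition ab_a : abpoly := [:: (1%:Z, [:: false])].
Definition ab_b : abpoly := [:: (1%:Z, [:: true])].
Definition ab_add (p q : abpoly) : abpoly := p ++ q.
Definition ab_scale (k : int) (p : abpoly) : abpoly :=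
  [seq (k * t.1, t.2) | t <- p].
Definition ab_opp (p : abpoly) : abpoly := ab_scale (-1) p.
Definition ab_mul (p q : abpoly) : abpoly :=
  [seq (t.1 * s.1, t.2 ++ s.2) | t <- p, s <- q].
Definition ab_sum (ps : seq abpoly) : abpoly := flatten ps.

Definition ab_c : abpoly := ab_add ab_a ab_b.

(* B_n = subsets of 'I_n, rank function = cardinality; rank n, so m = n-1.
   A subset S of {1,...,m} is encoded as S : {set 'I_(n.-1)}, where
   j : 'I_(n.-1) stands for the rank j+1. *)

(* f_S : number of chains 0 < x_1 < ... < x_k < 1 in B_n with rho(x_i) = s_i.
   Such a chain is encoded as a function X on 'I_(n.-1) with X j the
   element of rank j+1 for j in S (and X j = set0 for j not in S). *)
Definition flagf (n : nat) (S : {set 'I_(n.-1)}) : nat :=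
  #|[set X : {ffun 'I_(n.-1) -> {set 'I_n}} |
      [&& [forall j, (j \notin S) ==> (X j == set0)],
          [forall j in S, #|X j| == (j : nat).+1] &
          [forall j in S, forall j' in S, ((j : nat) < j')%N ==> (X j \proper X j')]]]|.

Definition vS (m : nat) (S : {set 'I_m}) : abpoly :=
  foldr ab_mul ab_one
    [seq (if j \in S then ab_b else ab_add ab_a (ab_opp ab_b)) | j <- enum 'I_m].

Definition PsiB (n : nat) : abpoly :=
  ab_sum [seq ab_scale (flagf T)%:Z (vS T) | T <- enum {set 'I_(n.-1)}].

Definition G_letter (x : bool) : word :=
  if x then [:: false; true] (* G(b) = ab *) else [:: true; false] (* G(a) = ba *).

(* Leibniz rule on a word: sum over positions of replacing the letter *)
Definition G_word (w : word) : abpoly :=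
  [seq (1%:Z, take j w ++ G_letter (nth false w j) ++ drop j.+1 w) | j <- iota 0 (size w)].

Definition G (p : abpoly) : abpoly :=
  ab_sum [seq ab_scale t.1 (G_word t.2) | t <- p].

Fixpoint PhiCheck (n i : nat) : abpoly :=
  match i with
  | 0 => ab_mul (PsiB n) ab_c
  | i'.+1 => G (PhiCheck n.-1 i')
  end.

Definition maj_exp (w : word) : nat :=
  \sum_(j < size w | nth false w j) (j.+1)%N.

Definition Theta (p : abpoly) : {poly int} :=
  \sum_(t <- p) t.1%:P * 'X^(maj_exp t.2).

Definition qint (m : nat) : {poly int} := \sum_(j < m) 'X^j.
Definition qfact (m : nat) : {poly int} := \prod_(k < m) qint k.+1.

(* Main.v *)
Require Import Defs.
From mathcomp Require Import all_boot all_order all_algebra.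
From mathcomp Require Import ring zify.
Set Implicit Arguments. Unset Strict Implicit. Unset Printing Implicit Defensive.
Import GRing.Theory.

Section Flags.
Variables m n : nat.

Definition flagset (Y : {set 'I_n}) (T : {set 'I_m}) : {set {ffun 'I_m -> {set 'I_n}}} :=
  [set X : {ffun 'I_m -> {set 'I_n}} | [&& [forall j, (j \notin T) ==> (X j == set0)],
          [forall j in T, #|X j| == (j : nat).+1],
          [forall j in T, forall j' in T, ((j : nat) < j')%N ==> (X j \proper X j')] &
          [forall j in T, X j \subset Y]]].

Lemma flagsetP (Y : {set 'I_n}) (T : {set 'I_m}) (X : {ffun 'I_m -> {set 'I_n}}) :
  reflect [/\ forall j, j \notin T -> X j = set0,
              forall j, j \in T -> #|X j| = (j : nat).+1,
              forall j j', j \in T -> j' \in T -> (j < j')%N -> X j \proper X j' &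
              forall j, j \in T -> X j \subset Y] (X \in flagset Y T).
Proof.
rewrite inE; apply: (iffP and4P).
  move=> [/forallP H1 /forall_inP H2 /forall_inP H3 /forall_inP H4]; split.
  - by move=> j hj; apply/eqP; move: (H1 j); rewrite hj.
  - by move=> j hj; apply/eqP; apply: H2.
  - by move=> j j' hj hj' hlt; move/forall_inP: (H3 j hj) => H; move: (H j' hj'); rewrite hlt.
  - exact: H4.
move=> [H1 H2 H3 H4]; split.
- by apply/forallP => j; apply/implyP => hj; rewrite H1.
- by apply/forall_inP => j hj; rewrite H2.
- by apply/forall_inP => j hj; apply/forall_inP => j' hj'; apply/implyP; apply: H3.
- by apply/forall_inP.
Qed.

Definition phi (j0 : 'I_m) (X : {ffun 'I_m -> {set 'I_n}}) : {ffun 'I_m -> {set 'I_n}} :=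
  [ffun j => if j == j0 then set0 else X j].
Definition psi (j0 : 'I_m) (Z : {set 'I_n}) (X : {ffun 'I_m -> {set 'I_n}}) : {ffun 'I_m -> {set 'I_n}} :=
  [ffun j => if j == j0 then Z else X j].

Lemma flagset_part (Y : {set 'I_n}) (T : {set 'I_m}) (j0 : 'I_m) : j0 \notin T -> (forall j, j \in T -> (j < j0)%N) ->
  #|flagset Y (j0 |: T)| =
  (\sum_(Z : {set 'I_n} | (Z \subset Y) && (#|Z| == j0.+1)) #|flagset Z T|)%N.
Proof.
move=> j0T Tlt.
rewrite -sum1_card (@partition_big _ _ _ _ _ _ _ (fun X : {ffun 'I_m -> {set 'I_n}} => X j0) (fun Z : {set 'I_n} => (Z \subset Y) && (#|Z| == j0.+1))).
  apply: eq_bigr => Z /andP [ZY /eqP cZ].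
  rewrite -sum1_card (reindex_onto (psi j0 Z) (phi j0)).
    apply: eq_bigl => X'; apply/idP/idP.
    + move=> /andP [/andP [/flagsetP [H1 H2 H3 H4] /eqP HZ] /eqP Hphi].
      have X'j0 : X' j0 = set0 by rewrite -Hphi ffunE eqxx.
      apply/flagsetP; split.
      * move=> j hj; case: (eqVneq j j0) => [-> //|ne].
        by move: (H1 j); rewrite ffunE (negPf ne) in_setU1 (negPf ne) hj => ->.
      * move=> j hj; have ne : j != j0 by apply: contraNneq j0T => <-.
        by move: (H2 j); rewrite ffunE (negPf ne) in_setU1 hj orbT => ->.
      * move=> j j' hj hj' hlt.
        have ne : j != j0 by apply: contraNneq j0T => <-.
        have ne' : j' != j0 by apply: contraNneq j0T => <-.
        move: (H3 j j'); rewrite !ffunE (negPf ne) (negPf ne') !in_setU1 hj hj' !orbT.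
        by apply.
      * move=> j hj; have ne : j != j0 by apply: contraNneq j0T => <-.
        have := H3 j j0; rewrite !ffunE (negPf ne) eqxx !in_setU1 hj eqxx orbT /=.
        rewrite -HZ ffunE eqxx => /(_ isT isT (Tlt j hj)); exact: proper_sub.
    + move=> /flagsetP [H1 H2 H3 H4].
      have X'j0 : X' j0 = set0 by apply: H1.
      have hsub : forall j, j \in T -> X' j \proper Z.
        move=> j hj; rewrite properEcard H4 //= H2 // cZ; exact: Tlt.
      apply/andP; split; [apply/andP; split|].
      * apply/flagsetP; split.
        - move=> j; rewrite in_setU1 negb_or => /andP [ne hj].
          by rewrite ffunE (negPf ne) H1.
        - move=> j; rewrite in_setU1 ffunE => /orP [/eqP ->|hj]; first by rewrite eqxx.
          have ne : j != j0 by apply: contraNneq j0T => <-.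
          by rewrite (negPf ne) H2.
        - move=> j j'; rewrite !in_setU1 !ffunE => /orP [/eqP ->|hj] /orP [/eqP ->|hj'] hlt.
          + by rewrite ltnn in hlt.
          + by move: (Tlt j' hj'); lia.
          + have ne : j != j0 by apply: contraNneq j0T => <-.
            by rewrite eqxx (negPf ne); apply: hsub.
          + have ne : j != j0 by apply: contraNneq j0T => <-.
            have ne' : j' != j0 by apply: contraNneq j0T => <-.
            by rewrite (negPf ne) (negPf ne'); apply: H3.
        - move=> j; rewrite in_setU1 ffunE => /orP [/eqP ->|hj]; first by rewrite eqxx.
          have ne : j != j0 by apply: contraNneq j0T => <-.
          rewrite (negPf ne); apply: subset_trans ZY; exact: proper_sub (hsub j hj).
      * by rewrite ffunE eqxx.
      * apply/eqP/ffunP => j; rewrite !ffunE; case: (eqVneq j j0) => [-> //|ne].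
        done.
  move=> X /andP [_ /eqP <-]; apply/ffunP => j; rewrite !ffunE.
  by case: (eqVneq j j0) => [-> //|ne].
move=> X /flagsetP [_ H2 _ H4]; rewrite H4 ?setU11 // H2 ?setU11 // eqxx //.
Qed.


Lemma flagset0 (Y : {set 'I_n}) : #|flagset Y set0| = 1%N.
Proof.
have -> : flagset Y set0 = [set [ffun=> set0]].
  apply/setP => X; rewrite in_set1; apply/flagsetP/eqP => [[H1 _ _ _]|->].
    by apply/ffunP => j; rewrite ffunE H1 ?inE.
  by split => // j; rewrite ?inE ?ffunE.
exact: cards1.
Qed.

Lemma sum_draws (Y : {set 'I_n}) k c :
  (\sum_(Z : {set 'I_n} | (Z \subset Y) && (#|Z| == k)) c)%N = ('C(#|Y|, k) * c)%N.
Proof.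
rewrite sum_nat_const -(cards_draws Y k); congr (_ * _)%N; apply: eq_card => Z.
by rewrite inE.
Qed.

Lemma max_in (T : {set 'I_m}) : T != set0 ->
  exists2 j0, j0 \in T & forall j, j \in T -> (j <= j0)%N.
Proof.
case/set0Pn => j1 j1T.
case: (@arg_maxnP _ j1 (fun j => j \in T) (fun j : 'I_m => (j : nat)) j1T) => j0 j0T H.
by exists j0.
Qed.

Lemma flagset_inv k : forall T : {set 'I_m}, #|T| = k -> forall Z1 Z2 : {set 'I_n},
  #|Z1| = #|Z2| -> #|flagset Z1 T| = #|flagset Z2 T|.
Proof.
elim: k => [|k IH] T cT Z1 Z2 cZ.
  by move/eqP: cT; rewrite cards_eq0 => /eqP ->; rewrite !flagset0.
have Tn0 : T != set0 by rewrite -card_gt0 cT.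
case: (max_in Tn0) => j0 j0T Hmax.
set T' := T :\ j0.
have j0T' : j0 \notin T' by rewrite !inE eqxx.
have T'lt : forall j, j \in T' -> (j < j0)%N.
  move=> j; rewrite !inE => /andP [ne hj]; rewrite ltn_neqAle Hmax // andbT.
  by apply: contra ne => /eqP h; apply/eqP/val_inj.
have cT' : #|T'| = k by move: cT; rewrite (cardsD1 j0 T) j0T add1n => -[].
rewrite -(setD1K j0T) !flagset_part //.
case: (boolP [exists Z : {set 'I_n}, #|Z| == j0.+1]) => [/existsP [Z0 /eqP cZ0]|/existsPn none].
  rewrite (eq_bigr (fun _ => #|flagset Z0 T'|)); last first.
    by move=> Z /andP [_ /eqP cZ']; apply: IH => //; rewrite cZ' cZ0.
  rewrite [RHS](eq_bigr (fun _ => #|flagset Z0 T'|)); last first.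
    by move=> Z /andP [_ /eqP cZ']; apply: IH => //; rewrite cZ' cZ0.
  by rewrite !sum_draws cZ.
by rewrite !big_pred0 // => Z; rewrite (negbTE (none Z)) andbF.
Qed.

Definition Yn N : {set 'I_n} := [set i : 'I_n | (i < N)%N].

Lemma card_Yn N : (N <= n)%N -> #|Yn N| = N.
Proof.
elim: N => [|N IH] hN.
  by apply/eqP; rewrite cards_eq0; apply/eqP/setP => i; rewrite !inE.
have hN' : (N < n)%N by [].
have -> : Yn N.+1 = Ordinal hN' |: Yn N.
  by apply/setP => i; rewrite !inE ltnS leq_eqVlt -val_eqE.
by rewrite cardsU1 IH ?(ltnW hN) // !inE ltnn.
Qed.

Lemma flag_add (T : {set 'I_m}) (j0 : 'I_m) N : j0 \notin T ->
  (forall j, j \in T -> (j < j0)%N) -> (j0 < n)%N -> (N <= n)%N ->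
  #|flagset (Yn N) (j0 |: T)| = ('C(N, j0.+1) * #|flagset (Yn j0.+1) T|)%N.
Proof.
move=> j0T Tlt hj0 hN; rewrite flagset_part //.
rewrite (eq_bigr (fun _ => #|flagset (Yn j0.+1) T|)); last first.
  by move=> Z /andP [_ /eqP cZ']; apply: (flagset_inv erefl); rewrite cZ' card_Yn.
by rewrite sum_draws card_Yn.
Qed.

End Flags.

Lemma flagf_eq n (T : {set 'I_n.-1}) : flagf T = #|flagset (Yn n n) T|.
Proof.
rewrite /flagf; apply: eq_card => X; rewrite !inE.
have -> : [forall j in T, X j \subset Yn n n] = true.
  by apply/forall_inP => j _; apply/subsetP => i _; rewrite inE.
by rewrite andbT.
Qed.


Local Open Scope ring_scope.

Fixpoint majs (s : nat) (w : word) : nat :=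
  match w with [::] => 0%N | x :: w' => ((if x then s.+1 else 0) + majs s.+1 w')%N end.

Lemma majs_cat s u v : majs s (u ++ v) = (majs s u + majs (s + size u) v)%N.
Proof.
elim: u s => [|x u IH] s /=; first by rewrite addn0.
by rewrite IH addSnnS addnA.
Qed.

Lemma maj_gen w s : (\sum_(j < size w | nth false w j) (j.+1 + s))%N = majs s w.
Proof.
elim: w s => [|x w IH] s /=; first by rewrite big_ord0.
rewrite big_mkcond big_ord_recl /= -IH [X in _ = (_ + X)%N]big_mkcond /=.
congr (_ + _)%N.
apply: eq_bigr => i _; rewrite /bump /= add0n add1n.
by case: (nth false w i) => //; rewrite addSnnS.
Qed.

Lemma maj_majs w : maj_exp w = majs 0 w.
Proof. rewrite -maj_gen /maj_exp; apply: eq_bigr => i _; by rewrite addn0. Qed.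

Definition Ths s (p : abpoly) : {poly int} := \sum_(t <- p) t.1%:P * 'X^(majs s t.2).

Lemma Theta_Ths p : Theta p = Ths 0 p.
Proof. apply: eq_bigr => t _; by rewrite maj_majs. Qed.

Lemma Ths_cat s p q : Ths s (p ++ q) = Ths s p + Ths s q.
Proof. by rewrite /Ths big_cat. Qed.

Lemma Ths_scale s k p : Ths s (ab_scale k p) = k%:P * Ths s p.
Proof.
rewrite /Ths big_map mulr_sumr; apply: eq_bigr => t _ /=.
by rewrite polyCM mulrA.
Qed.

Lemma Ths_sum s ps : Ths s (ab_sum ps) = \sum_(p <- ps) Ths s p.
Proof.
elim: ps => [|p ps IH]; first by rewrite /Ths big_nil big_nil.
by rewrite /ab_sum /= Ths_cat IH big_cons.
Qed.

Definition homd d (p : abpoly) := all (fun t => size t.2 == d) p.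

Lemma Ths_mul d s u p : homd d u -> Ths s (ab_mul u p) = Ths s u * Ths (s + d)%N p.
Proof.
move=> /allP H.
rewrite /Ths /ab_mul big_allpairs_dep /= mulr_suml.
apply: eq_big_seq => t /H /eqP Ht; rewrite mulr_sumr; apply: eq_bigr => r _ /=.
rewrite majs_cat Ht polyCM exprD; ring.
Qed.

Lemma hom_mul d e u p : homd d u -> homd e p -> homd (d + e)%N (ab_mul u p).
Proof.
move=> /allP Hu /allP Hp; apply/allP => z /allpairsP [[t r] [/Hu /eqP Ht /Hp /eqP Hr ->]].
by rewrite /= size_cat Ht Hr.
Qed.

Lemma hom_cat d p q : homd d p -> homd d q -> homd d (p ++ q).
Proof. by rewrite /homd all_cat => -> ->. Qed.

Lemma hom_scale d k p : homd d p -> homd d (ab_scale k p).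
Proof. by rewrite /homd /ab_scale all_map. Qed.

Lemma hom_sum d ps : all (homd d) ps -> homd d (ab_sum ps).
Proof. elim: ps => //= p ps IH /andP [H1 H2]; exact: hom_cat H1 (IH H2). Qed.

Definition wj (w : word) j := take j w ++ G_letter (nth false w j) ++ drop j.+1 w.

Lemma Ths_Gword0 w : Ths 0 (G_word w) = \sum_(0 <= j < size w) 'X^(majs 0 (wj w j)).
Proof.
rewrite /Ths /G_word big_map /index_iota subn0; apply: eq_bigr => j _ /=.
by rewrite polyC1 mul1r.
Qed.

Lemma majs_rcons s u x : majs s (rcons u x) = (majs s u + (if x then s + (size u).+1 else 0))%N.
Proof. rewrite -cats1 majs_cat /=; case: x => /=; lia. Qed.

Lemma qintS k : qint k.+1 = qint k + 'X^k.
Proof. by rewrite /qint big_ord_recr. Qed.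

Lemma qintSl k : qint k.+1 = 1 + 'X * qint k.
Proof.
rewrite /qint big_ord_recl expr0 mulr_sumr; congr (_ + _); apply: eq_bigr => i _.
by rewrite exprS.
Qed.

Lemma ThG_word w : Ths 0 (G_word w) = 'X * qint (size w) * 'X^(majs 0 w).
Proof.
elim/last_ind: w => [|w x IH].
  by rewrite Ths_Gword0 big_geq // /qint big_ord0 mulr0 mul0r.
rewrite Ths_Gword0 size_rcons big_nat_recr //=.
have E : forall j, (j < size w)%N -> wj (rcons w x) j = rcons (wj w j) x.
  move=> j hj; rewrite /wj drop_rcons // nth_rcons hj -!cats1 takel_cat ?(ltnW hj) //.
  by rewrite !catA.
rewrite (eq_big_nat _ _ (F2 := fun j => 'X^(majs 0 (wj w j)) * 'X^(if x then (size w).+2 else 0))); last first.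
  move=> j /andP [_ hj]; rewrite E // majs_rcons exprD /wj !size_cat size_take hj size_drop.
  congr (_ * 'X^ _); case: (x) => //=; case: (nth false w j) => /=; lia.
rewrite -big_distrl /= -Ths_Gword0 IH /wj -cats1 takel_cat // take_size nth_cat ltnn subnn /=.
rewrite drop_oversize ?size_cat ?addn1 // cats0 !majs_cat qintS /=.
clear E; case: x => /=; rewrite ?add0n ?addn0.
  rewrite -qintS qintSl !exprD !exprS; ring.
rewrite expr0 exprD exprS; ring.
Qed.

Lemma hom_Gword w : homd (size w).+1 (G_word w).
Proof.
apply/allP => t /mapP [j]; rewrite mem_iota add0n => /andP [_ hj] ->{t} /=.
rewrite !size_cat size_take hj size_drop; case: (nth false w j) => /=; apply/eqP; lia.
Qed.

Lemma hom_G d p : homd d p -> homd d.+1 (G p).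
Proof.
move=> /allP H; apply: hom_sum; apply/allP => q /mapP [t /H /eqP <- ->].
exact/hom_scale/hom_Gword.
Qed.

Lemma Ths_G d p : homd d p -> Ths 0 (G p) = 'X * qint d * Ths 0 p.
Proof.
move=> /allP H; rewrite /G Ths_sum big_map {2}/Ths mulr_sumr.
apply: eq_big_seq => t /H /eqP Ht; rewrite Ths_scale ThG_word Ht; ring.
Qed.

Lemma Ths_foldr a len (F : nat -> abpoly) : (forall i, homd 1 (F i)) ->
  Ths a (foldr ab_mul ab_one (map F (iota a len))) = \prod_(i <- iota a len) Ths i (F i).
Proof.
move=> HF; elim: len a => [|len IH] a /=.
  by rewrite big_nil /Ths big_seq1 /= polyC1 mul1r expr0.
by rewrite (Ths_mul _ _ (HF a)) addn1 IH big_cons.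
Qed.

Lemma homd_foldr l : all (homd 1) l -> homd (size l) (foldr ab_mul ab_one l).
Proof.
elim: l => [|u l IH] /=; first by [].
move=> /andP [H1 H2]; exact: (hom_mul H1 (IH H2)).
Qed.

Definition Gv m (T : {set 'I_m}) (k : nat) : abpoly :=
  if k \in map val (enum T) then ab_b else ab_add ab_a (ab_opp ab_b).

Lemma homd_Gv m T k : homd 1 (@Gv m T k).
Proof. by rewrite /Gv; case: ifP. Qed.

Lemma vS_Gv m (T : {set 'I_m}) : vS T = foldr ab_mul ab_one (map (Gv T) (iota 0 m)).
Proof.
rewrite /vS -val_enum_ord -map_comp; congr foldr; apply: eq_map => j /=.
by rewrite /Gv (mem_map val_inj) mem_enum.
Qed.

Definition wf m (T : {set 'I_m}) (j : 'I_m) : {poly int} :=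
  if j \in T then 'X^(j.+1) else 1 - 'X^(j.+1).

Lemma Ths_vS m (T : {set 'I_m}) : Ths 0 (vS T) = \prod_(j : 'I_m) wf T j.
Proof.
rewrite vS_Gv Ths_foldr; last exact: homd_Gv.
rewrite -val_enum_ord big_map big_enum /=; apply: eq_bigr => j _.
rewrite /Gv (mem_map val_inj) mem_enum /wf; case: (j \in T).
  by rewrite /Ths big_seq1 /= polyC1 mul1r addn0.
rewrite /Ths /ab_add /ab_opp /ab_scale /= big_cons big_seq1 /= polyC1 mul1r addn0.
by rewrite expr0 addn0 mulr1 polyCN polyC1 mulN1r.
Qed.

Lemma homd_vS m (T : {set 'I_m}) : homd m (vS T).
Proof.
rewrite vS_Gv; have := homd_foldr (l := map (Gv T) (iota 0 m)).
rewrite size_map size_iota; apply; apply/allP => u /mapP [k _ ->]; exact: homd_Gv.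
Qed.

Lemma homd_PsiB n : homd n.-1 (PsiB n).
Proof.
apply: hom_sum; apply/allP => u /mapP [T _ ->]; exact/hom_scale/homd_vS.
Qed.

Lemma Ths_PsiB n : Ths 0 (PsiB n) = \sum_(T : {set 'I_n.-1}) ((flagf T)%:Z)%:P * \prod_(j : 'I_n.-1) wf T j.
Proof.
rewrite /PsiB Ths_sum big_map big_enum /=; apply: eq_bigr => T _.
by rewrite Ths_scale Ths_vS.
Qed.

Lemma sum_subU1 (I : finType) (a : I) (D : {set I}) (F : {set I} -> {poly int}) :
  a \notin D ->
  \sum_(T : {set I} | T \subset a |: D) F T = \sum_(T : {set I} | T \subset D) F T + \sum_(T : {set I} | T \subset D) F (a |: T).
Proof.
move=> aD; rewrite (bigID (fun T : {set I} => a \in T)) /= addrC; congr (_ + _).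
  apply: eq_bigl => T; apply/andP/idP => [[/subsetP H /negP aT]|TD].
    apply/subsetP => x xT; move: (H x xT); rewrite in_setU1 => /orP [/eqP ax|//].
    by rewrite ax in xT.
  split; first by apply: subset_trans TD (subsetUr _ _).
  by apply/negP => aT; move/subsetP: TD => /(_ a aT); rewrite (negPf aD).
rewrite (reindex_onto (fun T => a |: T) (fun T => T :\ a)); last first.
  by move=> T /andP [_ aT]; rewrite setD1K.
apply: eq_bigl => T; apply/idP/idP.
  move=> /andP [/andP [H _] /eqP E]; rewrite -E.
  apply/subsetP => x; rewrite !inE => /andP [xa xT].
  move/subsetP: H => /(_ x); rewrite !inE xT => /(_ isT) /orP [/eqP xa'|//].
  by rewrite xa' eqxx in xa.
move=> TD; have aT : a \notin T.
  by apply/negP => aT; move/subsetP: TD => /(_ a aT); rewrite (negPf aD).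
by rewrite setU1K // eqxx setU11 setUS.
Qed.

Section Arec.
Variable n : nat.
Local Notation m := n.-1.

Definition Dk k : {set 'I_m} := [set j : 'I_m | ((j : nat).+1 < k)%N].
Definition Wk k (T : {set 'I_m}) := \prod_(j in Dk k) wf T j.
Definition Ak k N := \sum_(T : {set 'I_m} | T \subset Dk k)
   ((#|flagset (Yn n N) T|)%:Z)%:P * Wk k T.

Lemma A1 N : Ak 1 N = 1.
Proof.
have D1 : Dk 1 = set0 by apply/setP => j; rewrite !inE.
rewrite /Ak D1 (eq_bigl (pred1 set0)); last by move=> T; rewrite subset0.
rewrite big_pred1_eq flagset0 /Wk D1 big_set0 polyC1 mulr1; done.
Qed.

Lemma A_rec k N : (k.+2 <= n)%N -> (N <= n)%N ->
  Ak k.+2 N = (1 - 'X^(k.+1)) * Ak k.+1 N + ('C(N, k.+1)%:Z)%:P * 'X^(k.+1) * Ak k.+1 k.+1.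
Proof.
move=> hk hN.
have hk' : (k < m)%N by move: hk; case: n => //= n'; lia.
set j0 := Ordinal hk'.
have DS : Dk k.+2 = j0 |: Dk k.+1.
  by apply/setP => j; rewrite !inE -val_eqE /= ltnS leq_eqVlt ltnS.
have j0D : j0 \notin Dk k.+1 by rewrite !inE ltnn.
rewrite /Ak DS sum_subU1 //; congr (_ + _).
  rewrite mulr_sumr; apply: eq_bigr => T TD.
  have j0T : j0 \notin T by apply/negP => h; move/subsetP: TD => /(_ j0 h); rewrite (negPf j0D).
  rewrite /Wk DS big_setU1 //= /wf (negPf j0T); ring.
rewrite mulr_sumr; apply: eq_bigr => T TD.
have j0T : j0 \notin T by apply/negP => h; move/subsetP: TD => /(_ j0 h); rewrite (negPf j0D).
have Tlt : forall j, j \in T -> (j < j0)%N.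
  by move=> j /(subsetP TD); rewrite inE.
rewrite flag_add //; last by rewrite /j0 /=; lia.
rewrite /Wk DS big_setU1 //= /wf setU11.
rewrite (eq_bigr (wf T)); last first.
  move=> j jD; rewrite /wf in_setU1; have -> // : (j == j0) = false.
  by apply/negP => /eqP ej; rewrite ej in jD; rewrite jD in j0D.
rewrite PoszM polyCM /Wk; ring.
Qed.

End Arec.

Definition Bp k N : {poly int} := \sum_(s < k) ('C(N, s)%:Z)%:P * 'X^s * (1 - 'X) ^+ (k.-1 - s).

Lemma Bp_rec k N : Bp k.+2 N = (1 - 'X) * Bp k.+1 N + ('C(N, k.+1)%:Z)%:P * 'X^(k.+1).
Proof.
rewrite /Bp big_ord_recr /= subnn expr0 mulr1; congr (_ + _).
rewrite mulr_sumr; apply: eq_bigr => s _ /=.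
have hs : (s <= k)%N by rewrite -ltnS.
by rewrite subSn // exprS; ring.
Qed.

Lemma qfactS k : qfact k.+1 = qfact k * qint k.+1.
Proof. by rewrite /qfact big_ord_recr. Qed.

Lemma qint_mul k : (1 - 'X) * qint k = 1 - 'X^k.
Proof.
elim: k => [|k IH]; first by rewrite /qint big_ord0 expr0 mulr0 subrr.
rewrite qintS mulrDr IH exprS; ring.
Qed.

Lemma oneX_neq0 : (1 - 'X : {poly int}) != 0.
Proof.
apply/eqP => h; have := congr1 (fun p : {poly int} => p`_1) h.
by rewrite coefB coef1 coefX coef0 /=.
Qed.

Lemma Bp_diag k : Bp k k = qint k.
Proof.
apply: (mulfI oneX_neq0); rewrite qint_mul.
case: k => [|k]; first by rewrite /Bp big_ord0 mulr0 expr0 subrr.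
have := exprDn (1 - 'X : {poly int}) 'X k.+1.
rewrite subrK expr1n big_ord_recr /= subnn expr0 mul1r binn mulr1n => E.
rewrite {2}E addrK /Bp mulr_sumr; apply: eq_bigr => s _ /=.
have hs : (s <= k)%N by rewrite -ltnS.
rewrite subSn // exprS -mulr_natr -[X in X%:P]natz polyC_natr; ring.
Qed.

Lemma A_closed n k : forall N, (k.+1 <= N)%N -> (N <= n)%N ->
  Ak n k.+1 N = qfact k * Bp k.+1 N.
Proof.
elim: k => [|k IH] N hkN hN.
  by rewrite A1 /qfact big_ord0 /Bp big_ord1 /= bin0 polyC1 !mul1r expr0.
rewrite A_rec //; last by lia.
rewrite IH //; last by lia.
rewrite IH //; last by lia.
rewrite Bp_diag Bp_rec qfactS -qint_mul; ring.
Qed.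

Lemma Ths_PsiB_q n : (1 <= n)%N -> Ths 0 (PsiB n) = qfact n.
Proof.
move=> hn; rewrite Ths_PsiB.
have DT : Dk n n = setT.
  apply/setP => j; rewrite !inE; have := ltn_ord j; have := prednK hn; lia.
transitivity (Ak n n n); last first.
  have := @A_closed n n.-1 n; rewrite prednK // => -> //.
  by rewrite Bp_diag -{2 3}(prednK hn) qfactS.
rewrite /Ak /Wk DT; symmetry; apply: eq_big => T; first by rewrite subsetT.
move=> _; rewrite flagf_eq; congr (_ * _).
by apply: eq_bigl => j; rewrite inE.
Qed.

Lemma homd_c : homd 1 ab_c. Proof. by []. Qed.

Lemma homd_Phi i : forall n, (1 <= n)%N -> (i <= n - 1)%N -> homd n (PhiCheck n i).
Proof.
elim: i => [|i IH] n hn hi /=.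
  have := hom_mul (homd_PsiB n) homd_c; rewrite addn1 prednK //.
have := hom_G (IH n.-1 _ _); rewrite prednK //; apply; lia.
Qed.

Lemma Ths_c d : Ths d ab_c = 1 + 'X^(d.+1).
Proof. by rewrite /Ths /ab_c /ab_add big_cat !big_seq1 /= polyC1 !mul1r !addn0 expr0. Qed.

Lemma qint_add a b : qint (a + b) = qint a + 'X^a * qint b.
Proof.
rewrite /qint big_split_ord mulr_sumr; congr (_ + _); apply: eq_bigr => j _ /=.
by rewrite exprD.
Qed.

Theorem mainTheorem4 (n i : nat) :
  (1 <= n)%N -> (i <= n - 1)%N ->
  Theta (PhiCheck n i) = 'X^i * qint (2 * (n - i)) * qfact (n - 1).
Proof.
elim: i n => [|i IH] n hn hi.
  rewrite Theta_Ths /= (Ths_mul _ _ (homd_PsiB n)) Ths_PsiB_q // Ths_c add0n prednK //.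
  rewrite subn0 mul2n -addnn qint_add -{1}(prednK hn) qfactS subn1 prednK // expr0; ring.
rewrite Theta_Ths /= (Ths_G (homd_Phi _ _)); [|lia|lia].
rewrite -Theta_Ths IH; [|lia|lia].
have E1 : (n - i.+1 = n.-1 - i)%N by lia.
have E2 : (n - 1 = (n.-1 - 1).+1)%N by lia.
rewrite E1 E2 qfactS -E2 exprS -subn1; ring.
Qed.
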